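(* Let $h(x)=f(x)-f(x^* )$. Consider one step of the mini-batch block-coordinate Frank–Wolfe iteration described in the context with an arbitrary fixed step size $\gamma\in[0,1]$ (or its line-search variant): $x^{(k+1)}=x^{(k)}+\gamma\sum_{i\in S}(s_{[i]}-x^{(k)}_{[i]})$, where $S\subseteq[n]$ with $|S|=\tau$ is uniformly random, and the block points $s_{(i)}\in\mathcal{M}_i$ satisfy $\mathbb{E}\big[\langle s_{(S)},\nabla_{(S)}f(x^{(k)})\rangle-\min_{s'\in\mathcal{M}^{(S)}}\langle s',\nabla_{(S)}f(x^{(k)})\rangle\big]\le\frac{\delta\gamma C_f^\tau}{2}$ for some $\delta\ge0$. Then $$\mathbb{E}\,h(x^{(k+1)})\le\Big(1-\frac{\gamma\tau}{n}\Big)\mathbb{E}\,h(x^{(k)})+\frac{\gamma^2(1+\delta)}{2}C_f^{\tau},$$ where the expectation is over all randomness up to iteration $k+1$.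
   Context: Let $\mathcal{M}=\mathcal{M}_1\times\cdots\times\mathcal{M}_n$, each $\mathcal{M}_i\subset\mathbb{R}^{m_i}$ nonempty compact convex, $f:\mathbb{R}^m\to\mathbb{R}$ convex and differentiable, $x^*$ a minimizer of $f$ over $\mathcal{M}$, $x^{(k)}\in\mathcal{M}$. Notation: for $S\subseteq[n]$, $x_{(S)}$ is the subvector of blocks in $S$, $\mathcal{M}^{(S)}=\prod_{i\in S}\mathcal{M}_i$, $\nabla_{(S)}f$ the partial gradient, $s_{[S]}$ is $s_{(S)}$ padded with zeros outside $S$, $s_{(S)}=\prod_{i\in S}s_{(i)}$. Set curvature $C_f^{(S)}=\sup\frac{2}{\gamma^2}\big(f(y)-f(x)-\langle y_{(S)}-x_{(S)},\nabla_{(S)}f(x)\rangle\big)$ over $x\in\mathcal{M}$, $s_{(S)}\in\mathcal{M}^{(S)}$, $\gamma\in(0,1]$, $y=x+\gamma(s_{[S]}-x_{[S]})$; $C_f^\tau=\binom{n}{\tau}^{-1}\sum_{|S|=\tau}C_f^{(S)}$. The line-search variant replaces $x^{(k+1)}$ by $x^{(k)}+\sum_{i\in S}\gamma_i(s_{[i]}-x^{(k)}_{[i]})$ with blockwise line-search steps whenever this has smaller objective value than the fixed-step update. *)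

(* Defs.v *)
From HB Require Import structures.
From mathcomp Require Import all_boot all_order all_algebra.
From mathcomp Require Import all_classical all_reals all_analysis.
Set Implicit Arguments. Unset Strict Implicit. Unset Printing Implicit Defensive.
Import Order.TTheory GRing.Theory Num.Theory.
Import numFieldNormedType.Exports.
Local Open Scope classical_set_scope.
Local Open Scope ring_scope.

(* The ambient space R^m is 'rV[R]_m; coordinate j belongs to block blk j.
   A block vector s_(i) in R^{m_i} is represented by its zero-padding s_[i]. *)
Section Defs.
Context {R : realType} {n m : nat} (blk : 'I_m -> 'I_n).

Definition restrict (S : {set 'I_n}) (v : 'rV[R]_m) : 'rV[R]_m :=
  \row_j (if blk j \in S then v 0 j else 0).

Definition block_supported (i : 'I_n) : set 'rV[R]_m :=
  [set v | forall j, blk j != i -> v 0 j = 0].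

Definition cvx_set (A : set 'rV[R]_m) : Prop :=
  forall x y (t : R), A x -> A y -> 0 <= t <= 1 -> A (t *: x + (1 - t) *: y).

Definition convex_fun (f : 'rV[R]_m -> R) : Prop :=
  forall x y (t : R), 0 <= t <= 1 ->
    f (t *: x + (1 - t) *: y) <= t * f x + (1 - t) * f y.

Definition domain (Mi : 'I_n -> set 'rV[R]_m) : set 'rV[R]_m :=
  [set x | forall i, Mi i (restrict [set i] x)].

(* M^(S) = prod_{i in S} M_i, as padded vectors s_[S] *)
Definition block_prod (Mi : 'I_n -> set 'rV[R]_m) (S : {set 'I_n}) : set 'rV[R]_m :=
  [set v | exists vi : 'I_n -> 'rV[R]_m,
     (forall i, i \in S -> Mi i (vi i)) /\ v = \sum_(i in S) vi i].

(* <y_(S) - x_(S), grad_(S) f(x)> is the differential of f at x applied to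
   the padded vector (y - x)_[S] *)
Definition curv_S (f : 'rV[R]_m -> R) (Mi : 'I_n -> set 'rV[R]_m)
  (S : {set 'I_n}) : \bar R :=
  ereal_sup [set z | exists x s (g : R), domain Mi x /\ block_prod Mi S s /\
     0 < g <= 1 /\
     z = (2 / g ^+ 2 * (f (x + g *: (s - restrict S x)) - f x
           - 'd f x (restrict S ((x + g *: (s - restrict S x)) - x))))%:E].

Definition curv_tau (f : 'rV[R]_m -> R) (Mi : 'I_n -> set 'rV[R]_m)
  (tau : nat) : \bar R :=
  (('C(n, tau)%:R)^-1 : R)%:E * (\sum_(S : {set 'I_n} | #|S| == tau) curv_S f Mi S)%E.

(* expectation over a uniformly random S with |S| = tau *)
Definition avgS (tau : nat) (g : {set 'I_n} -> R) : R :=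
  ('C(n, tau)%:R)^-1 * \sum_(S : {set 'I_n} | #|S| == tau) g S.

Definition lin_min (f : 'rV[R]_m -> R) (Mi : 'I_n -> set 'rV[R]_m)
  (x : 'rV[R]_m) (S : {set 'I_n}) : R :=
  inf [set 'd f x v | v in block_prod Mi S].

Definition oracle_gap (f : 'rV[R]_m -> R) (Mi : 'I_n -> set 'rV[R]_m)
  (x : 'rV[R]_m) (S : {set 'I_n}) (s : 'I_n -> 'rV[R]_m) : R :=
  'd f x (\sum_(i in S) s i) - lin_min f Mi x S.

Definition fw_step (x : 'rV[R]_m) (s : 'I_n -> 'rV[R]_m) (S : {set 'I_n})
  (gamma : R) : 'rV[R]_m :=
  x + gamma *: \sum_(i in S) (s i - restrict [set i] x).

Definition ls_step (x : 'rV[R]_m) (s : 'I_n -> 'rV[R]_m) (S : {set 'I_n})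
  (gs : 'I_n -> R) : 'rV[R]_m :=
  x + \sum_(i in S) gs i *: (s i - restrict [set i] x).

End Defs.

(* Main.v *)
Require Import Defs.
From HB Require Import structures.
From mathcomp Require Import all_boot all_order all_algebra.
From mathcomp Require Import all_classical all_reals all_analysis.
From mathcomp Require Import measurable_realfun ring lra.
Set Implicit Arguments. Unset Strict Implicit. Unset Printing Implicit Defensive.
Import Order.TTheory GRing.Theory Num.Theory.
Import numFieldNormedType.Exports.
Local Open Scope classical_set_scope.
Local Open Scope ring_scope.
Lemma grad_ineq (R : realType) (m : nat) (f : 'rV[R]_m -> R) (x y : 'rV[R]_m) :
  convex_fun f -> differentiable f x -> 'd f x (y - x) <= f y - f x.
Proof.
move=> cf df; rewrite -deriveE //.
have der := @diff_derivable _ _ _ f x (y - x) df.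
rewrite /derive cvg_at_rightE; last exact: der.
apply: limr_le.
  move: der; rewrite /derivable => /cvg_ex [l hl]; apply/cvg_ex; exists l.
  move=> A /hl /nbhs_ballP [_ /posnumP[e] xe_A].
  by exists e%:num => //= z xe_z /gt_eqF/negbT/xe_A; exact.
near=> h.
have h0 : 0 < h by near: h; exact: nbhs_right_gt.
have h1 : h <= 1 by near: h; apply: nbhs_right_le; exact: ltr01.
have := cf y x h; rewrite h1 ltW // => /(_ isT) hc.
rewrite /= /shift.
have -> : h *: (y - x) + x = h *: y + (1 - h) *: x.
  by rewrite scalerBr scalerBl scale1r -addrA [- _ + x]addrC.
rewrite -[f y - f x](mulKf (lt0r_neq0 h0)) /GRing.scale /= ler_pM2l ?invr_gt0 //.
rewrite lerBlDr; apply: (le_trans hc); rewrite mulrBl mul1r mulrBr; lra.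
Unshelve. all: by end_near. Qed.
Lemma restrict_sum1 (R : realType) (n m : nat) (blk : 'I_m -> 'I_n) (S : {set 'I_n}) (v : 'rV[R]_m) :
  \sum_(i in S) Defs.restrict blk [set i] v = Defs.restrict blk S v.
Proof.
apply/rowP => j; rewrite summxE !mxE.
case: (boolP (blk j \in S)) => H.
  rewrite (bigD1 (blk j)) //= !mxE inE eqxx big1 ?addr0 // => i /andP[_ ne].
  by rewrite !mxE inE eq_sym (negbTE ne).
rewrite big1 // => i iS; rewrite !mxE inE.
have -> : (blk j == i) = false by apply/negbTE; apply: contraNneq H => ->.
by [].
Qed.

Lemma count_contain (n tau : nat) (k : 'I_n) : (0 < tau)%N ->
  #|[set S : {set 'I_n} | (#|S| == tau) && (k \in S)]%SET| = 'C(n.-1, tau.-1).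
Proof.
move=> tau0.
have -> : [set S : {set 'I_n} | (#|S| == tau) && (k \in S)]%SET =
   (fun A => k |: A) @: [set A : {set 'I_n} | (A \subset [set~ k]) && (#|A| == tau.-1)]%SET.
  apply/setP => S; rewrite inE; apply/idP/imsetP.
    case/andP => /eqP cS kS; exists (S :\ k); last by rewrite finset.setD1K.
    rewrite inE; apply/andP; split.
      by apply/fintype.subsetP => z; rewrite !inE => /andP[].
    by rewrite -cS (cardsD1 k S) kS.
  move=> [A]; rewrite inE => /andP[sA /eqP cA] ->.
  have kA : k \notin A by apply/negP => /(fintype.subsetP sA); rewrite !inE eqxx.
  by rewrite finset.setU11 andbT cardsU1 kA cA /= add1n prednK.
rewrite card_in_imset; last first.
  move=> A B; rewrite !inE => /andP[sA _] /andP[sB _] eqAB.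
  have kA : k \notin A by apply/negP => /(fintype.subsetP sA); rewrite !inE eqxx.
  have kB : k \notin B by apply/negP => /(fintype.subsetP sB); rewrite !inE eqxx.
  by rewrite -(finset.setU1K kA) -(finset.setU1K kB) eqAB.
by rewrite cards_draws cardsC1 card_ord.
Qed.

Lemma restrict_sumS (R : realType) (n m : nat) (blk : 'I_m -> 'I_n) (tau : nat) (v : 'rV[R]_m) :
  (0 < tau)%N ->
  \sum_(S : {set 'I_n} | #|S| == tau) Defs.restrict blk S v = ('C(n.-1, tau.-1))%:R *: v.
Proof.
move=> tau0; apply/rowP => j; rewrite summxE !mxE.
under eq_bigr do rewrite mxE.
rewrite -big_mkcondr /=.
rewrite (eq_bigl (fun S => S \in [set S : {set 'I_n} | (#|S| == tau) && (blk j \in S)]%SET)); last first.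
  by move=> S; rewrite inE.
by rewrite sumr_const count_contain // mulr_natl.
Qed.
Lemma lin_lb (R : realType) (n m : nat) (Mi : 'I_n -> set 'rV[R]_m) (f : 'rV[R]_m -> R) (x : 'rV[R]_m) (S : {set 'I_n}) :
  (forall i, compact (Mi i)) -> differentiable f x ->
  exists lb, forall v, block_prod Mi S v -> lb <= 'd f x v.
Proof.
move=> cM df.
have hb : forall i, exists M : R, forall v, Mi i v -> `|'d f x v| <= M.
  move=> i.
  have cc : compact ('d f x @` Mi i).
    apply: continuous_compact; last exact: cM. apply: continuous_subspaceT.
    exact: diff_continuous.
  case: (compact_bounded cc) => M0 [_ hM0].
  have lt1 : M0 < M0 + 1 by rewrite ltrDl ltr01.
  have hM := hM0 _ lt1.
  exists (M0 + 1) => v Mv; exact: (hM _ (imageP _ Mv)).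
have [Mf hMf] := boolp.choice hb.
exists (- \sum_(i in S) Mf i) => v [vi [hvi ->]].
rewrite -sumrN [X in _ <= X]raddf_sum; apply: ler_sum => i iS.
rewrite lerNl; apply: le_trans (hMf i _ (hvi i iS)).
by rewrite -normrN ler_norm.
Qed.
Lemma restrict_bp (R : realType) (n m : nat) (blk : 'I_m -> 'I_n) (Mi : 'I_n -> set 'rV[R]_m) S x :
  domain blk Mi x -> block_prod Mi S (Defs.restrict blk S x).
Proof.
move=> hx; exists (fun i => Defs.restrict blk [set i] x); split.
  by move=> i _; exact: hx.
by rewrite restrict_sum1.
Qed.

Lemma restrict_bp_id (R : realType) (n m : nat) (blk : 'I_m -> 'I_n) (Mi : 'I_n -> set 'rV[R]_m) S v :
  (forall i, Mi i `<=` block_supported blk i) ->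
  block_prod Mi S v -> Defs.restrict blk S v = v.
Proof.
move=> supp [vi [hvi ->]]; apply/rowP => j; rewrite mxE; case: ifP => // H.
rewrite summxE big1 // => i iS; apply: (supp i _ (hvi i iS)).
by apply/eqP => E; rewrite E iS in H.
Qed.

Lemma restrictZB (R : realType) (n m : nat) (blk : 'I_m -> 'I_n) S (a : R) (u v : 'rV[R]_m) :
  Defs.restrict blk S (a *: (u - v)) = a *: (Defs.restrict blk S u - Defs.restrict blk S v).
Proof.
apply/rowP => j; rewrite !mxE; case: ifP => _; rewrite ?mxE //.
by rewrite subrr mulr0.
Qed.

Lemma restrictB (R : realType) (n m : nat) (blk : 'I_m -> 'I_n) S (u v : 'rV[R]_m) :
  Defs.restrict blk S (u - v) = Defs.restrict blk S u - Defs.restrict blk S v.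
Proof. by have := restrictZB blk S 1 u v; rewrite !scale1r. Qed.

Lemma restrict_idem (R : realType) (n m : nat) (blk : 'I_m -> 'I_n) S (u : 'rV[R]_m) :
  Defs.restrict blk S (Defs.restrict blk S u) = Defs.restrict blk S u.
Proof. by apply/rowP => j; rewrite !mxE; case: (blk j \in S). Qed.

Lemma curv_ub (R : realType) (n m : nat) (blk : 'I_m -> 'I_n) (Mi : 'I_n -> set 'rV[R]_m)
  (f : 'rV[R]_m -> R) S x v (g : R) :
  (forall i, Mi i `<=` block_supported blk i) ->
  domain blk Mi x -> block_prod Mi S v -> 0 < g <= 1 ->
  ((2 / g ^+ 2 * (f (x + g *: (v - Defs.restrict blk S x)) - f x
     - 'd f x (g *: (v - Defs.restrict blk S x))))%:E <= curv_S blk f Mi S)%E.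
Proof.
move=> supp hx hv hg; apply: ereal_sup_ubound; exists x, v, g; split => //; split => //.
split => //; congr (_ %:E); congr (_ * (_ - _ - 'd f x _)).
by rewrite addrAC subrr add0r restrictZB restrict_idem (restrict_bp_id supp hv).
Qed.

Lemma curv_ge0 (R : realType) (n m : nat) (blk : 'I_m -> 'I_n) (Mi : 'I_n -> set 'rV[R]_m)
  (f : 'rV[R]_m -> R) S x :
  (forall i, Mi i `<=` block_supported blk i) ->
  domain blk Mi x -> (0 <= curv_S blk f Mi S)%E.
Proof.
move=> supp hx; have := @curv_ub _ _ _ _ _ f S x _ 1 supp hx (restrict_bp S hx).
rewrite subrr scaler0 addr0 linear0 !subr0 subrr mulr0; apply.
by rewrite ltr01 lexx.
Qed.
Lemma lin_min_le (R : realType) (n m : nat) (Mi : 'I_n -> set 'rV[R]_m) (f : 'rV[R]_m -> R) x S v :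
  (forall i, compact (Mi i)) -> differentiable f x ->
  block_prod Mi S v -> lin_min f Mi x S <= 'd f x v.
Proof.
move=> cM df hv; have [lb hlb] := lin_lb S cM df.
apply: ge_inf; last by exists v.
by exists lb => _ [u hu <-]; exact: hlb.
Qed.

Lemma pointwise (R : realType) (n m : nat) (blk : 'I_m -> 'I_n) (Mi : 'I_n -> set 'rV[R]_m)
  (f : 'rV[R]_m -> R) (xstar x : 'rV[R]_m) (sv : 'I_n -> 'rV[R]_m) (S : {set 'I_n}) (gamma c : R) xn :
  (forall i, Mi i `<=` block_supported blk i) -> (forall i, compact (Mi i)) ->
  differentiable f x -> domain blk Mi x -> domain blk Mi xstar ->
  (forall i, i \in S -> Mi i (sv i)) -> 0 <= gamma <= 1 ->
  (0 < gamma -> (curv_S blk f Mi S <= c%:E)%E) ->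
  (xn = fw_step blk x sv S gamma \/ exists gs : 'I_n -> R, (forall i, 0 <= gs i <= 1) /\
       xn = ls_step blk x sv S gs /\ f xn <= f (fw_step blk x sv S gamma)) ->
  f xn - f xstar <= (f x - f xstar) + gamma * oracle_gap f Mi x S sv
     + gamma * 'd f x (Defs.restrict blk S (xstar - x)) + gamma ^+ 2 / 2 * c.
Proof.
move=> supp cM df hx hxs hsv hg hc hxn.
have fxn : f xn <= f (fw_step blk x sv S gamma).
  by case: hxn => [->|[gs [_ [_ ?]]]].
set sS := \sum_(i in S) sv i.
have fwE : fw_step blk x sv S gamma = x + gamma *: (sS - Defs.restrict blk S x).
  by rewrite /fw_step sumrB restrict_sum1.
have hbp : block_prod Mi S sS by exists sv.
set D := 'd f x (sS - Defs.restrict blk S x).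
have P1 : f (fw_step blk x sv S gamma) <= f x + gamma * D + gamma ^+ 2 / 2 * c.
  rewrite fwE; have [g0|gpos] := eqVneq gamma 0.
    by rewrite g0 scale0r addr0 !mul0r expr0n /= mul0r mul0r !addr0.
  have gp : 0 < gamma by rewrite lt0r gpos; case/andP: hg.
  have := le_trans (curv_ub f supp hx hbp (g := gamma) _) (hc gp).
  rewrite lee_fin linearZ /= => /(_ ltac:(by rewrite gp; case/andP: hg)) H.
  set A := f _ - f x - _ in H.
  have -> : f (x + gamma *: (sS - Defs.restrict blk S x)) = A + f x + gamma * D.
    by rewrite /A /D /GRing.scale /=; lra.
  have : A <= gamma ^+ 2 / 2 * c.
    have -> : A = gamma ^+ 2 / 2 * (2 / gamma ^+ 2 * A).
      by field.
    by apply: ler_wpM2l => //; rewrite divr_ge0 // exprn_ge0 // ltW.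
  lra.
have P2 : D <= oracle_gap f Mi x S sv + 'd f x (Defs.restrict blk S (xstar - x)).
  rewrite /D /oracle_gap restrictB !linearB /=.
  have := lin_min_le cM df (restrict_bp S hxs); lra.
have : gamma * D <= gamma * (oracle_gap f Mi x S sv + 'd f x (Defs.restrict blk S (xstar - x))).
  by apply: ler_wpM2l => //; case/andP: hg.
lra.
Qed.

Lemma gap_ge0 (R : realType) (n m : nat) (Mi : 'I_n -> set 'rV[R]_m)
  (f : 'rV[R]_m -> R) x (sv : 'I_n -> 'rV[R]_m) (S : {set 'I_n}) :
  (forall i, compact (Mi i)) -> differentiable f x ->
  (forall i, i \in S -> Mi i (sv i)) -> 0 <= oracle_gap f Mi x S sv.
Proof.
move=> cM df hsv; rewrite /oracle_gap subr_ge0; apply: lin_min_le => //.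
by exists sv.
Qed.
Lemma avg_const (R : realType) (n tau : nat) (c : R) : (tau <= n)%N ->
  avgS tau (fun _ : {set 'I_n} => c) = c.
Proof.
move=> tn; rewrite /avgS.
rewrite (eq_bigl (fun S => S \in [set S : {set 'I_n} | #|S| == tau]%SET)); last by move=> S; rewrite inE.
rewrite sumr_const card_draws card_ord -[c *+ _]mulr_natl mulrA mulVf ?mul1r //.
by rewrite pnatr_eq0 -lt0n bin_gt0.
Qed.

Lemma avgD (R : realType) (n tau : nat) (g1 g2 : {set 'I_n} -> R) :
  avgS tau (fun S => g1 S + g2 S) = avgS tau g1 + avgS tau g2.
Proof. by rewrite /avgS big_split mulrDr. Qed.

Lemma avgZ (R : realType) (n tau : nat) (k : R) (g : {set 'I_n} -> R) :
  avgS tau (fun S => k * g S) = k * avgS tau g.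
Proof. by rewrite /avgS -mulr_sumr mulrCA. Qed.

Lemma avg_le (R : realType) (n tau : nat) (g1 g2 : {set 'I_n} -> R) :
  (forall S : {set 'I_n}, #|S| = tau -> g1 S <= g2 S) -> avgS tau g1 <= avgS tau g2.
Proof.
move=> h; rewrite /avgS; apply: ler_wpM2l; first by rewrite invr_ge0.
by apply: ler_sum => S /eqP; exact: h.
Qed.

Lemma avg_ge0 (R : realType) (n tau : nat) (g : {set 'I_n} -> R) :
  (forall S : {set 'I_n}, #|S| = tau -> 0 <= g S) -> 0 <= avgS tau g.
Proof.
move=> h; rewrite /avgS; apply: mulr_ge0; first by rewrite invr_ge0.
by apply: sumr_ge0 => S /eqP; exact: h.
Qed.

Lemma avg_df (R : realType) (n m : nat) (blk : 'I_m -> 'I_n) (f : 'rV[R]_m -> R) x v tau :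
  (0 < tau <= n)%N ->
  avgS tau (fun S => 'd f x (Defs.restrict blk S v)) = tau%:R / n%:R * 'd f x v.
Proof.
case/andP => t0 tn; rewrite /avgS -(raddf_sum ('d f x)) restrict_sumS // [X in _ * X]linearZ /=.
have Cn : ('C(n, tau))%:R != 0 :> R by rewrite pnatr_eq0 -lt0n bin_gt0.
have n0 : n%:R != 0 :> R by rewrite pnatr_eq0 -lt0n (leq_trans t0 tn).
have E := mul_bin_diag n tau.-1; rewrite prednK // in E.
have ER : n%:R * ('C(n.-1, tau.-1))%:R = tau%:R * ('C(n, tau))%:R :> R.
  by rewrite -!natrM E.
rewrite /GRing.scale /= mulrA; congr (_ * _).
apply: (mulfI n0); rewrite mulrCA ER; field.
by rewrite Cn n0.
Qed.
Lemma meas_avg (R : realType) (d : measure_display) (T : measurableType d) (n tau : nat)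
  (g : T -> {set 'I_n} -> R) :
  (forall S : {set 'I_n}, #|S| = tau -> measurable_fun setT (fun w => g w S)) ->
  measurable_fun setT (fun w => avgS tau (g w)).
Proof.
move=> hg.
have -> : (fun w => avgS tau (g w)) = (fun w => cst (('C(n, tau))%:R^-1) w *
   \sum_(S <- index_enum {set 'I_n}) (fun (S : {set 'I_n}) w => if #|S| == tau then g w S else 0) S w).
  by apply/funext => w; rewrite /avgS big_mkcond.
apply: measurable_funM; first exact: measurable_cst.
apply: measurable_sum => S; case: eqP => [/hg //|_]; exact: measurable_cst.
Qed.

Lemma INT (R : realType) (d : measure_display) (T : measurableType d) (P : probability T R)
  (F H G : T -> R) (b g K : R) :
  measurable_fun setT F -> measurable_fun setT H -> measurable_fun setT G ->
  (forall w, 0 <= H w) -> (forall w, 0 <= G w) ->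
  0 <= b -> 0 <= g -> 0 <= K ->
  (forall w, F w <= b * H w + g * G w + K) ->
  (\int[P]_w (F w)%:E <= b%:E * \int[P]_w (H w)%:E + g%:E * \int[P]_w (G w)%:E + K%:E)%E.
Proof.
move=> mF mH mG H0 G0 b0 g0 K0 hle.
have mE : forall h : T -> R, measurable_fun setT h -> measurable_fun setT (fun w => (h w)%:E).
  by move=> h mh; exact/measurable_EFinP.
have step : (\int[P]_w (F w)%:E <= \int[P]_w ((b * H w)%:E + (g * G w)%:E + K%:E))%E.
  rewrite integralE; apply: (@le_trans _ _ (\int[P]_w ((fun x => (F x)%:E)^\+ w))%E).
    apply: geeDl; rewrite oppe_le0; apply: integral_ge0 => w _; exact: funeneg_ge0.
  apply: ge0_le_integral => //.
  - exact/measurable_funepos/mE.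
  - apply: emeasurable_funD; first apply: emeasurable_funD.
    + exact/mE/measurable_funM.
    + exact/mE/measurable_funM.
    + exact: measurable_cst.
  - move=> w _; rewrite funeposE /= ge_max -!EFinD !lee_fin hle /=.
    by rewrite addr_ge0 // ?mulr_ge0 // addr_ge0 // mulr_ge0.
apply: (le_trans step).
have n1 : forall x, [set: T] x -> (0 <= (b * H x)%:E + (g * G x)%:E)%E.
  by move=> w _; rewrite -EFinD lee_fin addr_ge0 // mulr_ge0.
have m1 : measurable_fun [set: T] (fun x => ((b * H x)%:E + (g * G x)%:E)%E).
  apply: emeasurable_funD; [exact/mE/measurable_funM | exact/mE/measurable_funM].
have n2 : forall x, [set: T] x -> (0 <= K%:E)%E by move=> w _; rewrite lee_fin.
have m2 : measurable_fun [set: T] (fun _ : T => K%:E) by exact: measurable_cst.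
have n3 : forall x, [set: T] x -> (0 <= (b * H x)%:E)%E by move=> w _; rewrite lee_fin mulr_ge0.
have m3 : measurable_fun [set: T] (fun x => (b * H x)%:E) by exact/mE/measurable_funM.
have n4 : forall x, [set: T] x -> (0 <= (g * G x)%:E)%E by move=> w _; rewrite lee_fin mulr_ge0.
have m4 : measurable_fun [set: T] (fun x => (g * G x)%:E) by exact/mE/measurable_funM.
rewrite ge0_integralD // ge0_integralD //.
under eq_integral do rewrite EFinM.
rewrite ge0_integralZl //; last 2 first.
  - exact: mE.
  - by move=> w _; rewrite lee_fin.
under [X in (_ + X + _)%E]eq_integral do rewrite EFinM.
rewrite ge0_integralZl //; last 2 first.
  - exact: mE.
  - by move=> w _; rewrite lee_fin.
rewrite integral_cst // (_ : (K%:E * P [set: T] = K%:E)%E) //.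
by rewrite -[RHS]mule1; congr (_ * _)%E; exact: probability_setT.
Qed.
Unset Implicit Arguments.

Theorem lemma2 (R : realType) (n m : nat) (blk : 'I_m -> 'I_n)
  (Mi : 'I_n -> set 'rV[R]_m) (f : 'rV[R]_m -> R) (xstar : 'rV[R]_m)
  (d : measure_display) (T : measurableType d) (P : probability T R)
  (xk : T -> 'rV[R]_m) (s : T -> {set 'I_n} -> 'I_n -> 'rV[R]_m)
  (xnext : T -> {set 'I_n} -> 'rV[R]_m)
  (tau : nat) (gamma delta : R) :
  (forall i, Mi i !=set0) ->
  (forall i, compact (Mi i)) ->
  (forall i, cvx_set (Mi i)) ->
  (forall i, Mi i `<=` block_supported blk i) ->
  convex_fun f ->
  (forall x, differentiable f x) ->
  domain blk Mi xstar ->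
  (forall y, domain blk Mi y -> f xstar <= f y) ->
  (0 < tau <= n)%N ->
  0 <= gamma <= 1 ->
  0 <= delta ->
  (forall w, domain blk Mi (xk w)) ->
  (forall w (S : {set 'I_n}) i, #|S| = tau -> i \in S -> Mi i (s w S i)) ->
  (forall w (S : {set 'I_n}), #|S| = tau ->
     xnext w S = fw_step blk (xk w) (s w S) S gamma \/
     exists gs : 'I_n -> R, (forall i, 0 <= gs i <= 1) /\
       xnext w S = ls_step blk (xk w) (s w S) S gs /\
       f (xnext w S) <= f (fw_step blk (xk w) (s w S) S gamma)) ->
  measurable_fun setT (fun w => f (xk w)) ->
  (forall S : {set 'I_n}, #|S| = tau ->
     measurable_fun setT (fun w => f (xnext w S))) ->
  (forall S : {set 'I_n}, #|S| = tau ->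
     measurable_fun setT (fun w => oracle_gap f Mi (xk w) S (s w S))) ->
  (\int[P]_w (avgS tau (fun S => oracle_gap f Mi (xk w) S (s w S)))%:E
     <= (delta * gamma / 2)%:E * curv_tau blk f Mi tau)%E ->
  (\int[P]_w (avgS tau (fun S => f (xnext w S) - f xstar))%:E
     <= (1 - gamma * tau%:R / n%:R)%:E * \int[P]_w (f (xk w) - f xstar)%:E
        + (gamma ^+ 2 * (1 + delta) / 2)%:E * curv_tau blk f Mi tau)%E.
Proof.
move=> Mne cM cvx supp cf df dxs xsmin htau hg hd dxk hs hxn mfx mfn mgap hgap.
have /andP[t0 tn] := htau.
have /andP[g0 g1] := hg.
have Cpos : (0 < ('C(n, tau))%:R :> R) by rewrite ltr0n bin_gt0.
have npos : (0 < n%:R :> R) by rewrite ltr0n (leq_trans t0 tn).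
set F := fun w => avgS tau (fun S => f (xnext w S) - f xstar).
set H := fun w => f (xk w) - f xstar.
set G := fun w => avgS tau (fun S => oracle_gap f Mi (xk w) S (s w S)).
have H0 : forall w, 0 <= H w by move=> w; rewrite /H subr_ge0 xsmin.
have G0 : forall w, 0 <= G w.
  move=> w; apply: avg_ge0 => S cS; apply: gap_ge0; [exact: cM | exact: df | by move=> i; exact: hs].
have mF : measurable_fun setT F.
  apply: meas_avg => S cS; exact: (measurable_funB (mfn S cS) (measurable_cst _)).
have mH : measurable_fun setT H by exact: (measurable_funB mfx (measurable_cst _)).
have mG : measurable_fun setT G by exact: meas_avg.
have key : forall cS : {set 'I_n} -> R,
    (forall S : {set 'I_n}, #|S| = tau -> 0 < gamma -> (curv_S blk f Mi S <= (cS S)%:E)%E) ->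
    forall w, F w <= (1 - gamma * tau%:R / n%:R) * H w + gamma * G w + gamma ^+ 2 / 2 * avgS tau cS.
  move=> cS hcS w.
  have step1 : F w <= avgS tau (fun S => (f (xk w) - f xstar) + gamma * oracle_gap f Mi (xk w) S (s w S)
     + gamma * 'd f (xk w) (Defs.restrict blk S (xstar - xk w)) + gamma ^+ 2 / 2 * cS S).
    apply: avg_le => S cS'.
    exact: (pointwise supp cM (df _) (dxk w) dxs (fun i => hs w S i cS') hg (hcS S cS') (hxn w S cS')).
  rewrite !avgD !avgZ !avg_const // avg_df // in step1.
  have gi := grad_ineq xstar cf (df (xk w)).
  have hk : 0 <= gamma * (tau%:R / n%:R) by rewrite mulr_ge0 // divr_ge0 // ler0n.
  have := ler_wpM2l hk gi.
  move: step1; rewrite /F /H /G; nra.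
have k1 : tau%:R / n%:R <= 1 :> R by rewrite ler_pdivrMr // mul1r ler_nat.
have k0 : 0 <= tau%:R / n%:R :> R by rewrite divr_ge0 // ler0n.
have b0 : 0 <= 1 - gamma * tau%:R / n%:R.
  by rewrite subr_ge0 -mulrA; exact: mulr_ile1.
have [gz|gpos] := eqVneq gamma 0.
  have := @INT _ _ _ P F H G (1 - gamma * tau%:R / n%:R) gamma (gamma ^+ 2 / 2 * avgS tau (fun=> 0))
    mF mH mG H0 G0 b0 g0 ltac:(by rewrite gz expr0n /= !mul0r) (key (fun=> 0) ltac:(by move=> S _; rewrite gz ltxx)).
  move=> h; apply: (le_trans h).
  by rewrite gz !mul0r expr0n /= !mul0r !mul0e !adde0.
have gp : 0 < gamma by rewrite lt0r gpos.
have [fin|inf] := boolp.pselect (forall S : {set 'I_n}, #|S| == tau -> (curv_S blk f Mi S < +oo)%E).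
  set cS := fun S => fine (curv_S blk f Mi S).
  have hcS : forall S : {set 'I_n}, #|S| = tau -> 0 < gamma -> (curv_S blk f Mi S <= (cS S)%:E)%E.
    move=> S /eqP cS' _; rewrite /cS fineK // ge0_fin_numE ?fin //.
    exact: curv_ge0 supp dxs.
  have cS0 : forall S : {set 'I_n}, #|S| = tau -> 0 <= cS S.
    move=> S _; rewrite /cS; apply: fine_ge0; exact: curv_ge0 supp dxs.
  have ctau : curv_tau blk f Mi tau = (avgS tau cS)%:E.
    rewrite /curv_tau /avgS EFinM -sumEFin; congr (_ * _)%E; apply: eq_bigr => S cS'.
    by rewrite /cS fineK // ge0_fin_numE ?fin //; exact: curv_ge0 supp dxs.
  have K0 : 0 <= gamma ^+ 2 / 2 * avgS tau cS.
    by rewrite mulr_ge0 ?divr_ge0 ?exprn_ge0 //; apply: avg_ge0.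
  have := @INT _ _ _ P F H G (1 - gamma * tau%:R / n%:R) gamma (gamma ^+ 2 / 2 * avgS tau cS)
    mF mH mG H0 G0 b0 g0 K0 (key cS hcS).
  move=> h; apply: (le_trans h); rewrite ctau in hgap *.
  rewrite -addeA; apply: leeD2l.
  apply: le_trans (leeD2r _ (lee_wpmul2l _ hgap)) _; first by rewrite lee_fin.
  rewrite -!EFinM -EFinD lee_fin.
  suff -> : gamma * (delta * gamma / 2 * avgS tau cS) + gamma ^+ 2 / 2 * avgS tau cS
     = gamma ^+ 2 * (1 + delta) / 2 * avgS tau cS by [].
  by ring.
move/boolp.existsNP: inf => [S /boolp.not_implyP [/eqP cS' /negP]].
rewrite ltey negbK => /eqP Sinf.
have ctau : curv_tau blk f Mi tau = +oo%E.
  rewrite /curv_tau (bigD1 S) /=; last by rewrite cS'.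
  rewrite Sinf addye; last first.
    rewrite -ltNye; apply: (@lt_le_trans _ _ 0%E) => //.
    by apply: sume_ge0 => S0 _; exact: curv_ge0 supp dxs.
  by rewrite muleC gt0_mulye // lte_fin invr_gt0.
rewrite ctau [X in (_ + X)%E]muleC gt0_mulye ?lte_fin; last first.
  by rewrite !mulr_gt0 ?invr_gt0 ?exprn_gt0 // ltr_wpDr.
rewrite addey ?leey //.
rewrite -ltNye; apply: (@lt_le_trans _ _ 0%E) => //.
apply: mule_ge0; first by rewrite lee_fin.
by apply: integral_ge0 => w _; rewrite lee_fin subr_ge0 xsmin.
Qed.
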